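(* Let $\beta>0$, let $E_0,\dots,E_{d-1}$ be energy levels, and let $\mathbf{p}$ be a probability vector on these levels with $\beta$-order $\pi$. For any ordering $\alpha$ of the levels, let $\mathbf{p}^\alpha=P^{(\pi,\alpha)}\mathbf{p}$. Then $\mathbf{p}^\alpha$ has $\beta$-order $\alpha$, and it is maximal in the sense that there is no probability vector $\mathbf{q}\neq\mathbf{p}^\alpha$ with $\beta$-order $\alpha$ such that $\mathbf{p}\succeq_{\rm th}\mathbf{q}\succeq_{\rm th}\mathbf{p}^\alpha$.
   Context: $\beta$-order: a permutation $\pi$ of $\{0,\dots,d-1\}$ such that $p_{\pi(0)}e^{\beta E_{\pi(0)}}\ge p_{\pi(1)}e^{\beta E_{\pi(1)}}\ge\dots$. Thermo-majorization: the thermo-majorization curve of $\mathbf{p}$ with $\beta$-order $\pi$ is the piecewise linear curve joining $(0,0)$ and the points $\big(\sum_{i=0}^k e^{-\beta E_{\pi(i)}},\sum_{i=0}^k p_{\pi(i)}\big)$, $k=0,\dots,d-1$; $\mathbf{p}\succeq_{\rm th}\mathbf{p}'$ means the curve of $\mathbf{p}$ is never below that of $\mathbf{p}'$. $\beta$-permutation matrix: set $g_m=e^{-\beta E_m}$, $X_m=\sum_{i<m}g_{\alpha(i)}$, $Y_j=\sum_{l<j}g_{\pi(l)}$, and define the $d\times d$ matrix $P^{(\pi,\alpha)}$ by $P^{(\pi,\alpha)}_{\alpha(m)|\pi(j)}=\max\{0,\min(X_{m+1},Y_{j+1})-\max(X_m,Y_j)\}/g_{\pi(j)}$ (entry in row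 $\alpha(m)$, column $\pi(j)$), acting on column probability vectors. *)

(* Defs.v *)
From HB Require Import structures.
From mathcomp Require Import all_boot all_order all_fingroup all_algebra.
From mathcomp Require Import all_classical all_reals all_analysis.
Set Implicit Arguments. Unset Strict Implicit. Unset Printing Implicit Defensive.
Import Order.TTheory GRing.Theory Num.Theory.
Local Open Scope ring_scope.

Section Thermo.
Variables (R : realType) (d : nat) (beta : R) (E : 'I_d -> R).

Definition gw (m : 'I_d) : R := expR (- (beta * E m)).

Definition prob_vec (p : 'I_d -> R) : Prop :=
  (forall i, 0 <= p i) /\ \sum_i p i = 1.

Definition beta_order (p : 'I_d -> R) (pi : {perm 'I_d}) : Prop :=
  forall i j : 'I_d, (i <= j)%N ->
    p (pi j) * expR (beta * E (pi j)) <= p (pi i) * expR (beta * E (pi i)).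

Definition wsum (s : {perm 'I_d}) (k : nat) : R :=
  \sum_(i < d | (i < k)%N) gw (s i).

(* The thermo-majorization curve of p w.r.t. the ordering pi, evaluated at x:
   the piecewise-linear curve joining (0,0) and the points
   (sum_{i<=k} g_{pi i}, sum_{i<=k} p_{pi i}); on the k-th segment
   [wsum pi k, wsum pi (k+1)] it interpolates linearly. *)
Definition th_curve (p : 'I_d -> R) (pi : {perm 'I_d}) (x : R) : R :=
  \sum_(k < d) p (pi k) *
     Num.min 1 (Num.max 0 ((x - wsum pi k) / gw (pi k))).

Definition Zpart : R := \sum_i gw i.

Definition thmaj (p q : 'I_d -> R) : Prop :=
  forall (pi pi' : {perm 'I_d}), beta_order p pi -> beta_order q pi' ->
    forall x, 0 <= x -> x <= Zpart -> th_curve q pi' x <= th_curve p pi x.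

Definition beta_perm_mx (pi alpha : {perm 'I_d}) : 'M[R]_d :=
  \matrix_(r, c)
    (let m := (alpha^-1)%g r in let j := (pi^-1)%g c in
     Num.max 0 (Num.min (wsum alpha m.+1) (wsum pi j.+1)
                - Num.max (wsum alpha m) (wsum pi j)) / gw (pi j)).

Definition mx_act (P : 'M[R]_d) (p : 'I_d -> R) : 'I_d -> R :=
  fun r => \sum_c P r c * p c.

End Thermo.

(* Main.v *)
Require Import Defs.
From HB Require Import structures.
From mathcomp Require Import all_boot all_order all_fingroup all_algebra.
From mathcomp Require Import all_classical all_reals all_analysis.
From mathcomp Require Import ring lra.
Import Order.TTheory GRing.Theory Num.Theory.
Local Open Scope ring_scope.
Set Implicit Arguments. Unset Strict Implicit.

Ltac noMM t := lazymatch t with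
  | context[Num.min _ _] => fail | context[Num.max _ _] => fail | _ => idtac end.
Ltac mm := repeat match goal with
 | |- context[Num.min ?a ?b] => noMM a; noMM b; case: (leP a b) => ?
 | |- context[Num.max ?a ?b] => noMM a; noMM b; case: (leP a b) => ?
 end.

Definition ov (R : realType) (a b c e : R) := Num.max 0 (Num.min b e - Num.max a c).

Lemma ov_add (R : realType) (a b c e f : R) : c <= e -> e <= f ->
  ov a b c e + ov a b e f = ov a b c f.
Proof. rewrite /ov => *; mm; lra. Qed.

Lemma ovC (R : realType) (a b c e : R) : ov a b c e = ov c e a b.
Proof. rewrite /ov; mm; lra. Qed.

Lemma ov_ge0 (R : realType) (a b c e : R) : 0 <= ov a b c e.
Proof. rewrite /ov; mm; lra. Qed.

Lemma ov_clamp (R : realType) (X Y g : R) : 0 <= Y -> 0 < g ->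
  ov 0 X Y (Y + g) = g * Num.min 1 (Num.max 0 ((X - Y)/g)).
Proof. move=> hY hg. rewrite /ov.
set t := (X - Y)/g.
have hX : X = Y + g * t by rewrite /t; field; lra.
clearbody t; subst X.
have e: Y + g * t - Y = g * t by ring.
mm; nra. Qed.

Lemma sum_ltS (R : realType) (d : nat) (F : 'I_d -> R) (j : 'I_d) :
  \sum_(i < d | (i < j.+1)%N) F i = \sum_(i < d | (i < j)%N) F i + F j.
Proof.
rewrite (bigD1 j) //= addrC; congr (_ + _); apply: eq_bigl => i.
by rewrite ltnS ltn_neqAle andbC.
Qed.

Section S.
Lemma gw_gt0 (R : realType) (d : nat) (beta : R) (E : 'I_d -> R) m : 0 < gw beta E m.
Proof. by rewrite /gw expR_gt0. Qed.

Lemma wsumS (R : realType) (d : nat) (beta : R) (E : 'I_d -> R) s (j : 'I_d) :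
  wsum beta E s j.+1 = wsum beta E s j + gw beta E (s j).
Proof. by rewrite /wsum sum_ltS. Qed.

Lemma wsum_mono (R : realType) (d : nat) (beta : R) (E : 'I_d -> R) s k k' :
  (k <= k')%N -> wsum beta E s k <= wsum beta E s k'.
Proof.
move=> hk; rewrite /wsum !(big_mkcond (fun i : 'I_d => (i < _)%N)) /=.
apply: ler_sum => i _; case: ifP => h1; case: ifP => h2 //.
- by rewrite (leq_trans h1 hk) in h2.
- exact: ltW (gw_gt0 _ _ _).
Qed.

Lemma wsum0 (R : realType) (d : nat) (beta : R) (E : 'I_d -> R) s :
  wsum beta E s 0 = 0.
Proof. by rewrite /wsum big_pred0. Qed.

Lemma wsum_ge0 (R : realType) (d : nat) (beta : R) (E : 'I_d -> R) s k :
  0 <= wsum beta E s k.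
Proof. by rewrite -(wsum0 beta E s) wsum_mono. Qed.

Lemma wsum_d (R : realType) (d : nat) (beta : R) (E : 'I_d -> R) s k :
  (d <= k)%N -> wsum beta E s k = Zpart beta E.
Proof.
move=> hk; rewrite /wsum (eq_bigl xpredT); last first.
  by move=> i; apply: leq_trans (ltn_ord i) hk.
by rewrite /Zpart [RHS](reindex_inj (@perm_inj _ s)).
Qed.

Lemma tele (R : realType) (d : nat) (beta : R) (E : 'I_d -> R) s (a b : R) n :
  (n <= d)%N ->
  \sum_(j < d | (j < n)%N) ov a b (wsum beta E s j) (wsum beta E s j.+1)
  = ov a b 0 (wsum beta E s n).
Proof.
elim: n => [|n IH] hn.
  by rewrite big_pred0 // wsum0 /ov; mm; lra.
have := sum_ltS (fun j : 'I_d => ov a b (wsum beta E s j) (wsum beta E s j.+1)) (Ordinal hn).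
rewrite /= => ->; rewrite IH ?(ltnW hn) // ov_add //.
  exact: wsum_ge0.
exact: wsum_mono.
Qed.
End S.

Lemma pa_expr (R : realType) (d : nat) (beta : R) (E : 'I_d -> R)
  (p : 'I_d -> R) (pi alpha : {perm 'I_d}) (i : 'I_d) :
  mx_act (beta_perm_mx beta E pi alpha) p (alpha i) =
  \sum_(j : 'I_d) ov (wsum beta E alpha i) (wsum beta E alpha i.+1)
            (wsum beta E pi j) (wsum beta E pi j.+1) / gw beta E (pi j) * p (pi j).
Proof.
rewrite /mx_act (reindex_inj (@perm_inj _ pi)) /=; apply: eq_bigr => j _.
by rewrite mxE /= !permK.
Qed.

Lemma curveA (R : realType) (d : nat) (beta : R) (E : 'I_d -> R)
  (p : 'I_d -> R) (pi alpha : {perm 'I_d}) m : (m <= d)%N ->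
  \sum_(i < d | (i < m)%N) mx_act (beta_perm_mx beta E pi alpha) p (alpha i)
  = th_curve beta E p pi (wsum beta E alpha m).
Proof.
move=> hm.
under eq_bigr do rewrite pa_expr.
rewrite exchange_big /th_curve; apply: eq_bigr => j _.
rewrite -mulr_suml -mulr_suml.
under eq_bigr do rewrite ovC.
rewrite tele // ovC wsumS ov_clamp; last exact: gw_gt0.
  2: exact: wsum_ge0.
have := gw_gt0 beta E (pi j); move: (gw beta E (pi j)) => g hg.
move: (Num.min _ _) => c; field; lra.
Qed.

Lemma curveD (R : realType) (d : nat) (beta : R) (E : 'I_d -> R)
  (f : 'I_d -> R) (s : {perm 'I_d}) m :
  th_curve beta E f s (wsum beta E s m) = \sum_(i < d | (i < m)%N) f (s i).
Proof.
rewrite /th_curve [RHS]big_mkcond; apply: eq_bigr => k _ /=.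
have hg := gw_gt0 beta E (s k).
set t := (_ - _) / _.
case: ifP => hk.
  have h1 : 1 <= t.
    rewrite /t ler_pdivlMr // mul1r.
    have := wsum_mono beta E s hk; rewrite wsumS; lra.
  clearbody t; have -> : Num.min 1 (Num.max 0 t) = 1 by mm; lra.
  by rewrite mulr1.
have h1 : t <= 0.
  rewrite /t ler_pdivrMr // mul0r.
  have := @wsum_mono _ _ beta E s m k; rewrite leqNgt hk => /(_ isT); lra.
clearbody t; have -> : Num.min 1 (Num.max 0 t) = 0 by mm; lra.
by rewrite mulr0.
Qed.

Lemma ov_pos (R : realType) (a b c e : R) : 0 < ov a b c e -> c < b /\ a < e.
Proof. rewrite /ov; mm; move=> *; split; lra. Qed.

Lemma pa_order (R : realType) (d : nat) (beta : R) (E : 'I_d -> R)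
  (p : 'I_d -> R) (pi alpha : {perm 'I_d}) :
  beta_order beta E p pi ->
  beta_order beta E (mx_act (beta_perm_mx beta E pi alpha) p) alpha.
Proof.
move=> hp i j hij.
case: (eqVneq i j) => [->|hne]; first exact: lexx.
have hlt : (i < j)%N by rewrite ltn_neqAle hij andbT.
set pa := mx_act _ p.
pose X k := wsum beta E alpha k.
pose Y k := wsum beta E pi k.
pose r (k : 'I_d) := p (pi k) * expR (beta * E (pi k)).
have ginv x : expR (beta * E x) = (gw beta E x)^-1 by rewrite /gw expRN invrK.
have paE (l : 'I_d) : pa (alpha l) = \sum_(k : 'I_d) ov (X l) (X l.+1) (Y k) (Y k.+1) * r k.
  rewrite /pa pa_expr; apply: eq_bigr => k _; rewrite /r ginv; field.
  by rewrite gt_eqF // gw_gt0.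
have gE (l : 'I_d) : gw beta E (alpha l) = \sum_(k : 'I_d) ov (X l) (X l.+1) (Y k) (Y k.+1).
  rewrite /X /Y /=.
  rewrite [RHS](eq_bigl (fun k : 'I_d => (k < d)%N)); last by move=> k; rewrite ltn_ord.
  rewrite tele // (wsum_d beta E pi (leqnn d)) -(wsum_d beta E alpha (leqnn d)).
  have h0 := wsum_ge0 beta E alpha l.
  have h1 := wsum_mono beta E alpha (ltn_ord l).
  rewrite /X wsumS in h1 *.
  have := gw_gt0 beta E (alpha l).
  rewrite /ov; mm; lra.
have key : pa (alpha j) * gw beta E (alpha i) <= pa (alpha i) * gw beta E (alpha j).
  rewrite !paE !gE mulr_sumr mulr_suml; apply: ler_sum => k _.
  rewrite mulr_suml mulr_sumr; apply: ler_sum => l _.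
  have A0 := ov_ge0 (X i) (X i.+1) (Y k) (Y k.+1).
  have B0 := ov_ge0 (X j) (X j.+1) (Y l) (Y l.+1).
  move: A0 B0; rewrite !le0r => /orP[/eqP->|A0] /orP[/eqP->|B0];
    rewrite ?(mul0r, mulr0, lexx) //.
  have hkl : (k <= l)%N.
    rewrite leqNgt; apply/negP => hlk.
    have [h1 _] := ov_pos A0.
    have [_ h2] := ov_pos B0.
    have h3 : X i.+1 <= X j by apply: wsum_mono.
    have h4 : Y l.+1 <= Y k by apply: wsum_mono.
    lra.
  have := hp _ _ hkl; rewrite -/(r k) -/(r l) => hr.
  have hAB : 0 <= ov (X i) (X i.+1) (Y k) (Y k.+1) * ov (X j) (X j.+1) (Y l) (Y l.+1).
    by apply: mulr_ge0; apply: ltW.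
  nra.
rewrite !ginv.
have gi := gw_gt0 beta E (alpha i); have gj := gw_gt0 beta E (alpha j).
rewrite ler_pdivrMr // mulrAC ler_pdivlMr //.
Qed.

Theorem lemma2 (R : realType) (d : nat) (beta : R) (E : 'I_d -> R)
  (p : 'I_d -> R) (pi alpha : {perm 'I_d}) :
  0 < beta -> prob_vec p -> beta_order beta E p pi ->
  let pa := mx_act (beta_perm_mx beta E pi alpha) p in
  beta_order beta E pa alpha /\
  ~ (exists q : 'I_d -> R,
       [/\ prob_vec q, q <> pa, beta_order beta E q alpha,
           thmaj beta E p q & thmaj beta E q pa]).
Proof.
move=> _ _ hp pa.
have hpa : beta_order beta E pa alpha by exact: pa_order.
split => //.
case=> q [_ hne hq hpq hqpa]; apply: hne.
have hS m : (m <= d)%N ->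
    \sum_(i < d | (i < m)%N) q (alpha i) = \sum_(i < d | (i < m)%N) pa (alpha i).
  move=> hm.
  have hx0 := wsum_ge0 beta E alpha m.
  have hxZ : wsum beta E alpha m <= Zpart beta E.
    by rewrite -(wsum_d beta E alpha (leqnn d)) wsum_mono.
  have h1 := hpq pi alpha hp hq _ hx0 hxZ.
  have h2 := hqpa alpha alpha hq hpa _ hx0 hxZ.
  rewrite !curveD in h2; rewrite curveD -(curveA _ _ _ _ _ hm) in h1.
  apply/eqP; rewrite eq_le; apply/andP; split => //.
apply/funext => r; rewrite -(permKV alpha r).
set i := (alpha^-1)%g r.
have := hS i.+1 (ltn_ord i); rewrite !sum_ltS hS ?(ltnW (ltn_ord i)) //.
by move/addrI.
Qed.
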